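(* Let $\mathcal{P}\subset K[x_1,\ldots,x_n]$ be a chordal polynomial set with $x_1<\cdots<x_n$ as a perfect elimination ordering. Let $\overline{\mathrm{red}}_n(\mathcal{P}),\ldots,\overline{\mathrm{red}}_1(\mathcal{P})$ be any successive reduction of $\mathcal{P}$, with arbitrary valid reduction data at each step. Then $G(\overline{\mathrm{red}}_i(\mathcal{P}))\subseteq G(\mathcal{P})$ for every $i=n,\ldots,1$.
   Context: Let $K$ be a field and $K[x_1,\ldots,x_n]$ the polynomial ring, with the variables ordered $x_1<\cdots<x_n$. For a polynomial $F$, $\mathrm{supp}(F)$ is the set of variables effectively appearing in $F$. For a set of polynomials $\mathcal{P}$, $\mathrm{supp}(\mathcal{P})=\bigcup_{F\in\mathcal{P}}\mathrm{supp}(F)$. For a nonconstant $F$, $\mathrm{lv}(F)$ is the greatest variable in $\mathrm{supp}(F)$. For a polynomial set $\mathcal{P}$ and $1\le i\le n$, $\mathcal{P}^{(i)}=\{P\in\mathcal{P}:\mathrm{lv}(P)=x_i\}$; constants belong to no $\mathcal{P}^{(i)}$. The associated graph $G(\mathcal{P})$ is the undirected graph whose vertex set is $\mathrm{supp}(\mathcal{P})$, with an edge between distinct $x_i,x_j$ iff some $F\in\mathcal{P}$ has $x_i,x_j\in\mathrm{supp}(F)$. For graphs, $G\subseteq G'$ means that $G$ is a subgraph of $G'$, i.e. both the vertex set and the edge set are contained. An ordering of the vertices of a graph is a perfect elimination ordering if, for every vertex $v$, the set consisting of $v$ and all neighbours of $v$ smaller than $v$ is a clique. A polynomial set $\mathcal{P}$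 is called chordal with $x_1<\cdots<x_n$ as a perfect elimination ordering if the restriction of this ordering to $\mathrm{supp}(\mathcal{P})$ is a perfect elimination ordering of $G(\mathcal{P})$. Reduction step: let $\mathcal{S}$ be a polynomial set and $1\le i\le n$ with $\mathcal{S}^{(i)}\neq\emptyset$. Reduction data for $(\mathcal{S},i)$ is a pair $(T_i,\mathcal{R}_i)$ such that: - $T_i\in K[x_1,\ldots,x_i]\setminus K[x_1,\ldots,x_{i-1}]$ and $\mathcal{R}_i\subset K[x_1,\ldots,x_{i-1}]$, where $K[x_1,\ldots,x_0]=K$; - $\mathrm{supp}(T_i)\subseteq\mathrm{supp}(\mathcal{S}^{(i)})$ and $\mathrm{supp}(\mathcal{R}_i)\subseteq\mathrm{supp}(\mathcal{S}^{(i)})$. Given such a pair, $$\mathrm{red}_i(\mathcal{S})=\bigcup_{j>i}\mathcal{S}^{(j)}\ \cup\ \{T_i\}\ \cup\ \bigcup_{j<i}\big(\mathcal{S}^{(j)}\cup\mathcal{R}_i^{(j)}\big).$$ If $\mathcal{S}^{(i)}=\emptyset$, set $\mathrm{red}_i(\mathcal{S})=\bigcup_{j}\mathcal{S}^{(j)}$. Successive reduction: $\overline{\mathrm{red}}_{n+1}(\mathcal{P})=\mathcal{P}$ and $\overline{\mathrm{red}}_i(\mathcal{P})=\mathrm{red}_i(\overline{\mathrm{red}}_{i+1}(\mathcal{P}))$ for $i=n,\ldots,1$. At each step some reduction data for $(\overline{\mathrm{red}}_{i+1}(\mathcal{P}),i)$ is chosen. *)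

(* Defs.v *)
(* Multivariate polynomials are not available in the installed
   libraries, so K[x_1,...,x_n] is built as iterated univariate polynomials:
   mpoly K 0 = K, mpoly K (n+1) = (mpoly K n)[x_{n+1}]. Variables are
   represented by natural numbers 1..n (variable k stands for x_k). *)
From HB Require Import structures.
From mathcomp Require Import all_boot all_order all_algebra.
Set Implicit Arguments. Unset Strict Implicit. Unset Printing Implicit Defensive.
Import GRing.Theory.
Local Open Scope ring_scope.

Section MPoly.
Variable K : fieldType.

Fixpoint mpoly (n : nat) : nzRingType :=
  match n with
  | 0 => K
  | n'.+1 => ({poly mpoly n'} : nzRingType)
  end.

(* suppv n p k : the variable x_k effectively appears in p *)
Fixpoint suppv (n : nat) : mpoly n -> nat -> bool :=
  match n return mpoly n -> nat -> bool with
  | 0 => fun _ _ => false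
  | n'.+1 => fun (p : {poly mpoly n'}) k =>
      ((k == n'.+1) && (1 < size p)%N) || has (fun c => suppv c k) (polyseq p)
  end.

Variable n : nat.
Notation P := (mpoly n).

(* leading variable index (0 for constants; variables are 1..n) *)
Definition lv (F : P) : nat := (\max_(k < n.+1 | suppv F k) k)%N.

Definition nonconst (F : P) : bool := (0 < lv F)%N.

Definition supp_set (S : seq P) (k : nat) : Prop :=
  exists2 F, F \in S & suppv F k.

Definition level (S : seq P) (i : nat) : seq P := [seq F <- S | lv F == i].

Definition gedge (S : seq P) (j k : nat) : Prop :=
  j <> k /\ exists2 F, F \in S & suppv F j && suppv F k.

Definition subgraph (S S' : seq P) : Prop :=
  (forall k, supp_set S k -> supp_set S' k) /\
  (forall j k, gedge S j k -> gedge S' j k).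

(* x_1 < ... < x_n restricted to supp(S) is a perfect elimination ordering
   of G(S): for every vertex v, v together with its smaller neighbours is
   a clique. *)
Definition chordal (S : seq P) : Prop :=
  forall v, supp_set S v ->
  forall u w,
    (u = v \/ (gedge S u v /\ (u < v)%N)) ->
    (w = v \/ (gedge S w v /\ (w < v)%N)) ->
    u <> w -> gedge S u w.

Definition red_data (S : seq P) (i : nat) (T : P) (R : seq P) : Prop :=
  (forall k, suppv T k -> (k <= i)%N) /\ suppv T i /\
  (forall G, G \in R -> forall k, suppv G k -> (k < i)%N) /\
  (forall k, suppv T k -> supp_set (level S i) k) /\
  (forall G, G \in R -> forall k, suppv G k -> supp_set (level S i) k).

(* red_i(S) for given reduction data (T, R), when S^(i) is nonempty:
   union_{j>i} S^(j) ∪ {T} ∪ union_{j<i} (S^(j) ∪ R^(j)), j ranging over 1..n *)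
Definition red (S : seq P) (i : nat) (T : P) (R : seq P) : seq P :=
  [seq F <- S | (i < lv F)%N] ++ [:: T] ++
  [seq F <- S | (0 < lv F < i)%N] ++ [seq G <- R | (0 < lv G < i)%N].

(* red_i(S) when S^(i) is empty: union_j S^(j) *)
Definition red_empty (S : seq P) : seq P := [seq F <- S | nonconst F].

Definition red_step (i : nat) (S S' : seq P) : Prop :=
  (level S i = [::] /\ S' = red_empty S) \/
  (level S i <> [::] /\ exists T R, red_data S i T R /\ S' = red S i T R).

Definition successive_reduction (P0 : seq P) (Sred : nat -> seq P) : Prop :=
  Sred n.+1 = P0 /\
  forall i, (1 <= i <= n)%N -> red_step i (Sred i.+1) (Sred i).

End MPoly.

(* Main.v *)
Require Import Defs.
From mathcomp Require Import all_boot all_order all_algebra.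

Set Implicit Arguments. Unset Strict Implicit.
Lemma suppv_le (K : fieldType) (n : nat) (p : mpoly K n) k :
  suppv p k -> (k <= n)%N.
Proof.
elim: n p => [//|n IH] p /=.
case/orP => [/andP[/eqP -> _] //|/hasP [c _ Hc]].
by apply: leq_trans (IH c Hc) _.
Qed.

Lemma lv_ge (K : fieldType) (n : nat) (F : mpoly K n) k :
  suppv F k -> (k <= lv F)%N.
Proof.
move=> Hk; have Hk' : (k < n.+1)%N by rewrite ltnS (suppv_le Hk).
by rewrite /lv; apply: (leq_bigmax_cond (Ordinal Hk')).
Qed.

Lemma lv_supp (K : fieldType) (n : nat) (F : mpoly K n) :
  (0 < lv F)%N -> suppv F (lv F).
Proof.
have : (lv F == 0%N) || suppv F (lv F).
  rewrite /lv; apply: (big_ind (fun m => (m == 0%N) || suppv F m)) => //.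
  move=> x y Hx Hy; case: (leqP x y) => Hxy.
    by [].
  by [].
  by move=> i ->; rewrite orbT.
by case/orP => [/eqP ->|].
Qed.

Section Main.
Variables (K : fieldType) (n : nat).
Implicit Types (S : seq (mpoly K n)).

Lemma level_facts S i j : (0 < i)%N -> supp_set (level S i) j ->
  exists2 F, F \in S & [/\ lv F = i, suppv F j, suppv F i & (j <= i)%N].
Proof.
move=> Hi [F]; rewrite mem_filter => /andP [/eqP HF FS] Hj.
exists F => //; split => //; last by rewrite -HF lv_ge.
by rewrite -HF lv_supp // HF.
Qed.

Lemma clique S P0 i j k : (0 < i)%N -> chordal P0 -> subgraph S P0 ->
  supp_set (level S i) j -> supp_set (level S i) k -> j <> k -> gedge P0 j k.
Proof.
move=> Hi Hch [Hv He] Hj Hk Hjk.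
have [F FS [HF Fj Fi ji]] := level_facts Hi Hj.
have [G GS [HG Gk Gi ki]] := level_facts Hi Hk.
have Pi : supp_set P0 i by apply: Hv; exists F.
apply: (Hch i Pi) => //.
  case: (eqVneq j i) => [->|jni]; [by left|right]; split.
    by apply: He; split; [exact/eqP | exists F => //; rewrite Fj Fi].
  by rewrite ltn_neqAle jni.
case: (eqVneq k i) => [->|kni]; [by left|right]; split.
  by apply: He; split; [exact/eqP | exists G => //; rewrite Gk Gi].
by rewrite ltn_neqAle kni.
Qed.

Lemma sub_helper S S' P0 i : (0 < i)%N -> chordal P0 -> subgraph S P0 ->
  (forall F, F \in S' -> F \in S \/ (forall k, suppv F k -> supp_set (level S i) k)) ->
  subgraph S' P0.
Proof.
move=> Hi Hch [Hv He] HS; split.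
  move=> k [F /HS [FS|Hl] Fk]; first by apply: Hv; exists F.
  have [G GS [_ Gk _ _]] := level_facts Hi (Hl k Fk).
  by apply: Hv; exists G.
move=> j k [jk [F /HS [FS|Hl] /andP [Fj Fk]]].
  by apply: He; split => //; exists F => //; rewrite Fj Fk.
by apply: (clique Hi Hch (conj Hv He) (Hl j Fj) (Hl k Fk) jk).
Qed.

Lemma step_sub S S' P0 i : (0 < i)%N -> chordal P0 -> subgraph S P0 ->
  red_step i S S' -> subgraph S' P0.
Proof.
move=> Hi Hch Hsub [[_ ->]|[_ [T [R [[_ [_ [_ [HT HR]]]] ->]]]]].
  apply: (sub_helper Hi Hch Hsub) => F; rewrite mem_filter => /andP [_ FS].
  by left.
apply: (sub_helper Hi Hch Hsub) => F.
rewrite !mem_cat !mem_filter inE.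
case/orP => [/andP [_ FS]|]; first by left.
case/orP => [/eqP ->|]; first by right.
case/orP => [/andP [_ FS]|/andP [_ FR]]; first by left.
by right; apply: HR.
Qed.

End Main.

Theorem theorem3p5 (K : fieldType) (n : nat) (P0 : seq (mpoly K n))
  (Sred : nat -> seq (mpoly K n)) :
  chordal P0 ->
  successive_reduction P0 Sred ->
  forall i, (1 <= i <= n)%N -> subgraph (Sred i) P0.
Proof.
move=> Hch [H0 Hstep].
have key : forall m, (m <= n)%N -> subgraph (Sred (n.+1 - m)) P0.
  elim => [_|m IH Hm].
    by rewrite subn0 H0; split.
  have -> : (n.+1 - m.+1 = (n - m))%N by rewrite subSS.
  have Hm' : (n - m).+1 = (n.+1 - m)%N by rewrite subSn // ltnW.
  apply: (@step_sub _ _ (Sred (n - m).+1) _ _ (n - m)).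
  - by rewrite subn_gt0.
  - exact: Hch.
  - by rewrite Hm'; apply: IH; apply: ltnW.
  - by apply: Hstep; rewrite subn_gt0 Hm leq_subr.
move=> i /andP [Hi1 Hin].
have -> : i = (n.+1 - (n.+1 - i))%N by rewrite subKn // ltnW.
apply: key; rewrite leq_subLR -addn1 addnC leq_add2r //.
Qed.
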